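(* Let $\mathbb{R}^2=\bigcup_{a=1}^{n}R_a$ and $\mathbb{R}^2=\bigcup_{b=1}^{n'}R'_b$ be two parabolic subdivisions of $\mathbb{R}^2$. Then the family of all intersections $R_a\cap R'_b$ that have nonempty interior is again a parabolic subdivision of $\mathbb{R}^2$.
   Context: A parabola is a set $\{(u,v): au^2+buv+cv^2+du+ev+f=0\}$ with $(a,b,c,d,e,f)\neq 0$ and $b^2-4ac=0$ (this includes lines and the empty set). A parabolic region is a set $\{s\in\mathbb{R}^2: a_is_1^2+b_is_1s_2+c_is_2^2+d_is_1+e_is_2+f_i\le 0,\ i=1,\dots,k\}$ with each $(a_i,\dots,f_i)\neq 0$ and $b_i^2-4a_ic_i=0$. A parabolic subdivision of a convex set $R$ is a finite union $R=\bigcup_i R_i$ of parabolic regions such that for $j\ne k$, $R_j\cap R_k$ is empty or contained in a parabola. *)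

(* Defs.v *)
From HB Require Import structures.
From mathcomp Require Import all_boot all_order all_algebra.
From mathcomp Require Import all_classical all_reals all_analysis.
Set Implicit Arguments. Unset Strict Implicit. Unset Printing Implicit Defensive.
Import Order.TTheory GRing.Theory Num.Theory.
Import numFieldNormedType.Exports.
Local Open Scope classical_set_scope.
Local Open Scope ring_scope.

Record conic (R : realType) := Conic {
  ca : R; cb : R; cc : R; cd : R; ce : R; cf : R }.

Definition conic_eval (R : realType) (q : conic R) (s : R * R) : R :=
  ca q * s.1 ^+ 2 + cb q * s.1 * s.2 + cc q * s.2 ^+ 2
  + cd q * s.1 + ce q * s.2 + cf q.

Definition parabolic_conic (R : realType) (q : conic R) : Prop :=
  ~ (ca q = 0 /\ cb q = 0 /\ cc q = 0 /\ cd q = 0 /\ ce q = 0 /\ cf q = 0)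
  /\ cb q ^+ 2 - 4%:R * ca q * cc q = 0.

(* a parabola (including lines and the empty set) *)
Definition parabola (R : realType) (P : set (R * R)) : Prop :=
  exists q : conic R, parabolic_conic q /\ P = [set s | conic_eval q s = 0].

Definition parabolic_region (R : realType) (A : set (R * R)) : Prop :=
  exists (k : nat) (q : 'I_k -> conic R),
    (forall i, parabolic_conic (q i)) /\
    A = [set s | forall i, conic_eval (q i) s <= 0].

Definition parabolic_subdivision (R : realType) (I : Type) (C : set (R * R))
    (D : set I) (F : I -> set (R * R)) : Prop :=
  [/\ finite_set D,
      C = \bigcup_(i in D) F i,
      (forall i, D i -> parabolic_region (F i)) &
      (forall i j, D i -> D j -> i <> j ->
         F i `&` F j = set0 \/
         exists P, parabola P /\ F i `&` F j `<=` P)].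

(* Main.v *)
Set Warnings "-all".
Require Import Defs.
From HB Require Import structures.
From mathcomp Require Import all_boot all_order all_algebra.
From mathcomp Require Import all_classical all_reals all_analysis.
Import Order.TTheory GRing.Theory Num.Theory.
Import numFieldNormedType.Exports.
Local Open Scope classical_set_scope.
Local Open Scope ring_scope.
Lemma ce_cont (R : realType) (q : conic R) : continuous (conic_eval q).
Proof.
move=> x.
have hf : {for x, continuous (fun s : R * R => s.1)} by exact: cvg_fst.
have hs : {for x, continuous (fun s : R * R => s.2)} by exact: cvg_snd.
have hc : forall c : R, {for x, continuous (fun s : R * R => c)} by move=> c; exact: cvg_cst.
have hD : forall f g : R * R -> R, {for x, continuous f} -> {for x, continuous g} -> {for x, continuous (fun s => f s + g s)}.
  by move=> f g; exact: continuousD.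
have hM : forall f g : R * R -> R, {for x, continuous f} -> {for x, continuous g} -> {for x, continuous (fun s => f s * g s)}.
  by move=> f g; exact: continuousM.
have hX : forall f : R * R -> R, {for x, continuous f} -> {for x, continuous (fun s => f s ^+ 2)}.
  move=> f hf'; have := hM f f hf' hf'.
  suff -> : (fun s => f s ^+ 2) = (fun s => f s * f s) by [].
  by apply: funext => s /=; rewrite expr2.
rewrite /conic_eval.
repeat (apply: (hD (fun s => _) (fun s => _)) || apply: (hM (fun s => _) (fun s => _)) || apply: (hX (fun s => _)) || exact: hc || exact: hf || exact: hs).
Qed.
Lemma region_closed (R : realType) (A : set (R * R)) :
  parabolic_region A -> closed A.
Proof.
case=> k [q [_ ->]].
have -> : [set s | forall i, conic_eval (q i) s <= 0] =
   \bigcap_(i in setT) (conic_eval (q i) @^-1` [set r : R | r <= 0]).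
  by apply/seteqP; split => s /= h i; [move=> _|]; apply: h.
apply: closed_bigI => i _.
apply: (proj1 (continuous_closedP _) (@ce_cont _ (q i))).
exact: closed_le.
Qed.

Lemma region_inter (R : realType) (A B : set (R * R)) :
  parabolic_region A -> parabolic_region B -> parabolic_region (A `&` B).
Proof.
case=> k1 [q1 [h1 ->]] [k2 [q2 [h2 ->]]].
exists (k1 + k2)%N.
exists (fun i => match fintype.split i with inl j => q1 j | inr j => q2 j end).
split.
  by move=> i; case: (fintype.split i).
apply/seteqP; split => s /=.
  by move=> [H1 H2] i; case: (fintype.split i).
move=> H; split => j.
  by have := H (lshift k2 j); rewrite (unsplitK (inl _ j)).
by have := H (rshift k1 j); rewrite (unsplitK (inr _ j)).
Qed.

Lemma key (T : topologicalType) (I : eqType) (S : I -> set T) (l : seq I) :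
  forall V : set T, (forall p, closed (S p)) -> open V -> V !=set0 ->
  (forall y, V y -> exists2 p, p \in l & S p y) ->
  exists p, exists y, [/\ p \in l, V y & nbhs y (S p)].
Proof.
elim: l => [|p0 l IH] V cl oV [x0 Vx0] cov.
  by have [p] := cov x0 Vx0; rewrite in_nil.
case: (pselect (exists y, V y /\ ~ S p0 y)) => [[y [Vy nSy]]|h].
  have [|||p [y' [pl [Vy' _] nb]]] := IH (V `&` ~` S p0) cl.
  - by apply: openI => //; exact: closed_openC.
  - by exists y.
  - move=> z [Vz nz]; have [p] := cov z Vz.
    rewrite in_cons => /orP [/eqP ep|pl] Sz.
      by exfalso; apply: nz; rewrite -ep.
    by exists p.
  by exists p, y'; split => //; rewrite in_cons pl orbT.
exists p0, x0; split => //; first exact: mem_head.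
have nV : nbhs x0 V by apply: open_nbhs_nbhs; split.
apply: filterS nV => z Vz; apply: contrapT => nz; apply: h; by exists z.
Qed.

Theorem proposition2 (R : realType) (n n' : nat)
    (Ra : 'I_n -> set (R * R)) (Rb : 'I_n' -> set (R * R)) :
  parabolic_subdivision setT setT Ra ->
  parabolic_subdivision setT setT Rb ->
  parabolic_subdivision setT
    [set p : 'I_n * 'I_n' | interior (Ra p.1 `&` Rb p.2) !=set0]
    (fun p => Ra p.1 `&` Rb p.2).
Proof.
move=> [_ covA regA subA] [_ covB regB subB].
have clS : forall p : 'I_n * 'I_n', closed (Ra p.1 `&` Rb p.2).
  by move=> p; apply: region_closed; apply: region_inter; [apply: regA|apply: regB].
split.
- exact: finite_finset.
- apply/seteqP; split; last by [].
  move=> x _; apply: contrapT => hx.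
  set G := [set p : 'I_n * 'I_n' | interior (Ra p.1 `&` Rb p.2) !=set0] in hx *.
  set U := \bigcup_(p in G) (Ra p.1 `&` Rb p.2) in hx *.
  have clU : closed U by apply: closed_bigcup => //; exact: finite_finset.
  have [|||p [y [_ Vy nb]]] := @key _ _ (fun p : 'I_n * 'I_n' => Ra p.1 `&` Rb p.2)
      (index_enum ('I_n * 'I_n')%type) (~` U) clS.
  + exact: closed_openC.
  + by exists x.
  + move=> y _.
    have : (\bigcup_(i in setT) Ra i) y by rewrite -covA.
    have : (\bigcup_(i in setT) Rb i) y by rewrite -covB.
    move=> [b _ hb] [a _ ha].
    by exists (a, b); [rewrite mem_index_enum | split].
  apply: Vy; exists p => //; last exact: nbhs_singleton.
  by exists y.
- by move=> p _; apply: region_inter; [apply: regA|apply: regB].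
- move=> [a b] [a' b'] _ _ /= hne.
  case: (eqVneq a a') => [ea|ha].
    have hb : b <> b' by move=> eb; apply: hne; rewrite ea eb.
    have [E|[P [hP hsub]]] := subB b b' I I hb.
      left; apply/seteqP; split => // s [[_ h1] [_ h2]].
      by rewrite -E; split.
    right; exists P; split => // s [[_ h1] [_ h2]]; apply: hsub; by split.
  have ha' : a <> a' by move/eqP; rewrite (negbTE ha).
  have [E|[P [hP hsub]]] := subA a a' I I ha'.
    left; apply/seteqP; split => // s [[h1 _] [h2 _]].
    by rewrite -E; split.
  right; exists P; split => // s [[h1 _] [h2 _]]; apply: hsub; by split.
Qed.
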